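(* Let $m$ and $\Delta$ be numbers such that $m$ and $\langle m;\Delta\rangle$ are numbers and $\langle m;\Delta\rangle$ is balanced. Then $\langle m;\Delta\rangle=m$.
   Context: Games are short normal-play combinatorial games, written $\{L\mid R\}$, with the usual disjunctive sum $+$ and equality of values. A number is a game $G$ with $G^L<G<G^R$ for all options; short number values are identified with dyadic rationals. For numbers $m,\Delta$, the ball $\langle m;\Delta\rangle$ is the game $\{x\mid y\}$ where $x$ and $y$ are the canonical forms of $m+\Delta$ and $m-\Delta$ respectively ($m$ is the midpoint, $\Delta$ the radius); balls are only considered when they are numbers, which forces $\Delta<0$. A ball $\langle m;\Delta\rangle$ is balanced if $\langle m;\Delta\rangle+\langle m;\Delta\rangle=m+m$. *)

(* Defs.v *)
From mathcomp Require Import all_boot all_order all_algebra.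
Set Implicit Arguments. Unset Strict Implicit. Unset Printing Implicit Defensive.
Import Order.TTheory GRing.Theory Num.Theory.

Inductive game : Type := Game : seq game -> seq game -> game.

Definition lopts (g : game) : seq game := let: Game l _ := g in l.
Definition ropts (g : game) : seq game := let: Game _ r := g in r.

(* lege x = (fun y => x <= y, fun y => y <= x), the usual recursive order:
   x <= y  iff  no x^L with y <= x^L  and no y^R with y^R <= x. *)
Fixpoint lege (x : game) : (game -> bool) * (game -> bool) :=
  let: Game xl xr := x in
  let fix lg (y : game) : bool * bool :=
    let: Game yl yr := y in
    ((* x <= y *)
     all (fun xL => ~~ (lege xL).2 y) xl && all (fun yR => ~~ (lg yR).2) yr,
     (* y <= x *)
     all (fun yL => ~~ (lg yL).1) yl && all (fun xR => ~~ (lege xR).1 y) xr)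
  in (fun y => (lg y).1, fun y => (lg y).2).

Definition game_le (x y : game) : bool := (lege x).1 y.
Definition game_lt (x y : game) : bool := game_le x y && ~~ game_le y x.
Definition game_eq (x y : game) : Prop := game_le x y /\ game_le y x.

Fixpoint game_add (x : game) : game -> game :=
  let: Game xl xr := x in
  fix add_x (y : game) : game :=
    let: Game yl yr := y in
    Game ([seq game_add xL y | xL <- xl] ++ [seq add_x yL | yL <- yl])
         ([seq game_add xR y | xR <- xr] ++ [seq add_x yR | yR <- yr]).

Definition is_number (g : game) : bool :=
  all (fun gL => game_lt gL g) (lopts g) && all (fun gR => game_lt g gR) (ropts g).

Definition zero_game : game := Game [::] [::].
Fixpoint pos_game (n : nat) : game :=
  if n is n'.+1 then Game [:: pos_game n'] [::] else zero_game.
Fixpoint neg_game (n : nat) : game :=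
  if n is n'.+1 then Game [::] [:: neg_game n'] else zero_game.
Definition int_game (z : int) : game :=
  match z with Posz n => pos_game n | Negz n => neg_game n.+1 end.

(* dyad_game k p = canonical form of p / 2^k *)
Fixpoint dyad_game (k : nat) (p : int) : game :=
  if k is k'.+1 then
    if odd `|p|%N then
      Game [:: dyad_game k' ((p - 1) %/ 2)%Z] [:: dyad_game k' ((p + 1) %/ 2)%Z]
    else dyad_game k' (p %/ 2)%Z
  else int_game p.

Definition dyadic (q : rat) : Prop := exists k : nat, denq q = Posz (2 ^ k)%N.

(* canonical form of a dyadic rational q (denq q = 2^k, numq q/2^k reduced) *)
Definition canon (q : rat) : game := dyad_game (trunc_log 2 `|denq q|%N) (numq q).

Definition ball (m D : rat) : game :=
  Game [:: canon (m + D)%R] [:: canon (m - D)%R].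

Definition balanced (m D : rat) : Prop :=
  game_eq (game_add (ball m D) (ball m D)) (game_add (canon m) (canon m)).

(* Main.v *)
Require Import Defs.
From mathcomp Require Import all_boot all_order all_algebra zify.
Set Implicit Arguments. Unset Strict Implicit.

Fixpoint gsize (g : game) : nat :=
  let: Game l r := g in (sumn (map gsize l) + sumn (map gsize r)).+1.

Lemma In_size a l : List.In a l -> (gsize a <= sumn (map gsize l))%N.
Proof. elim: l => //= b l IH [->|/IH]; lia. Qed.

Lemma eq_all_In (T : Type) (p q : T -> bool) s :
  (forall a, List.In a s -> p a = q a) -> all p s = all q s.
Proof. elim: s => //= a s IH H; rewrite H /=; [rewrite IH // => b Hb; apply H; tauto| tauto]. Qed.

Lemma allIn (T : Type) (p : T -> bool) s : all p s <-> (forall a, List.In a s -> p a).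
Proof.
elim: s => //= a s IH; split.
- move/andP=> [Ha Hs] b [<-//|Hb]; exact: (proj1 IH Hs).
- move=> H; apply/andP; split; first by apply H; left.
  apply/IH => b Hb; apply H; tauto.
Qed.

Lemma lege2 x y : (lege x).2 y = game_le y x.
Proof.
move: {2}(gsize x + gsize y) (leqnn (gsize x + gsize y)) => n.
elim: n x y => [|n IH] [xl xr] [yl yr] /=; first lia.
move=> Hn.
rewrite /game_le /=.
congr andb.
- apply: eq_all_In => a Ha; congr negb.
  have := IH a (Game xl xr). rewrite /game_le /=. move=> ->; first done.
  have := In_size Ha; simpl in Hn |- *; lia.
- apply: eq_all_In => a Ha; congr negb.
  have := IH (Game yl yr) a. rewrite /game_le /=. move=> <-; first done.
  have := In_size Ha; simpl in Hn |- *; lia.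
Qed.

Lemma le_unfold xl xr yl yr : game_le (Game xl xr) (Game yl yr) =
  all (fun a => ~~ game_le (Game yl yr) a) xl && all (fun b => ~~ game_le b (Game xl xr)) yr.
Proof.
rewrite {1}/game_le /=; congr andb; apply: eq_all_In => a _.
- by rewrite lege2.
- by rewrite -lege2.
Qed.

Lemma notall_In (T : Type) (p : T -> bool) s : ~~ all p s -> exists a, List.In a s /\ ~~ p a.
Proof.
elim: s => //= a s IH; rewrite negb_and; case/orP => [H|/IH [b [Hb Hp]]].
- by exists a; split; [left|].
- by exists b; split; [right|].
Qed.

Lemma leP x y : game_le x y <->
  (forall a, List.In a (lopts x) -> ~~ game_le y a) /\
  (forall b, List.In b (ropts y) -> ~~ game_le b x).
Proof.
case: x => xl xr; case: y => yl yr; rewrite le_unfold /=; split.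
- by move/andP=> [/allIn H1 /allIn H2].
- by move=> [H1 H2]; apply/andP; split; apply/allIn.
Qed.

Lemma nleP x y : ~~ game_le x y ->
  (exists a, List.In a (lopts x) /\ game_le y a) \/
  (exists b, List.In b (ropts y) /\ game_le b x).
Proof.
case: x => xl xr; case: y => yl yr; rewrite le_unfold negb_and.
case/orP => /notall_In [a [Ha Hn]]; rewrite negbK in Hn.
- by left; exists a.
- by right; exists a.
Qed.

Lemma le_lopt x y a : game_le x y -> List.In a (lopts x) -> ~~ game_le y a.
Proof. by move/leP=> [H _]; apply: H. Qed.
Lemma le_ropt x y b : game_le x y -> List.In b (ropts y) -> ~~ game_le b x.
Proof. by move/leP=> [_ H]; apply: H. Qed.

Lemma size_l a x : List.In a (lopts x) -> (gsize a < gsize x)%N.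
Proof. case: x => l r /= /In_size; lia. Qed.
Lemma size_r a x : List.In a (ropts x) -> (gsize a < gsize x)%N.
Proof. case: x => l r /= /In_size; lia. Qed.

Lemma gsize_gt0 x : (0 < gsize x)%N.
Proof. by case: x. Qed.

Lemma le_refl x : game_le x x.
Proof.
move: {2}(gsize x) (leqnn (gsize x)) => n.
elim: n x => [|n IH] x Hx; first by case: x Hx.
apply/leP; split=> a Ha; apply/negP => H.
- have := le_lopt H Ha; rewrite IH //; have := size_l Ha; lia.
- have := le_ropt H Ha; rewrite IH //; have := size_r Ha; lia.
Qed.

Lemma not_le_lopt x a : List.In a (lopts x) -> ~~ game_le x a.
Proof. exact: le_lopt (le_refl x). Qed.
Lemma not_le_ropt x b : List.In b (ropts x) -> ~~ game_le b x.
Proof. exact: le_ropt (le_refl x). Qed.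

Lemma le_trans x y z : game_le x y -> game_le y z -> game_le x z.
Proof.
move: {2}(gsize x + gsize y + gsize z) (leqnn (gsize x + gsize y + gsize z)) => n.
elim: n x y z => [|n IH] x y z Hs Hxy Hyz; first by have := gsize_gt0 x; lia.
apply/leP; split=> a Ha; apply/negP => H.
- have := le_lopt Hxy Ha; rewrite (IH y z a) //; have := size_l Ha; lia.
- have := le_ropt Hyz Ha; rewrite (IH a x y) //; have := size_r Ha; lia.
Qed.

Lemma In_map (A B : Type) (f : A -> B) a s : List.In a s -> List.In (f a) (map f s).
Proof. elim: s => //= b s IH [->|/IH]; tauto. Qed.
Lemma In_map_inv (A B : Type) (f : A -> B) c s : List.In c (map f s) -> exists a, List.In a s /\ c = f a.
Proof.
elim: s => //= b s IH [<-|/IH [a [Ha ->]]]; first by exists b; split; [left|].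
by exists a; split; [right|].
Qed.
Lemma In_cat (A : Type) (a : A) s t : List.In a (s ++ t) <-> List.In a s \/ List.In a t.
Proof. elim: s => //= [|b s IH]; [tauto| rewrite IH; tauto]. Qed.

Lemma lopts_add x y : lopts (game_add x y) =
  map (fun a => game_add a y) (lopts x) ++ map (fun a => game_add x a) (lopts y).
Proof. by case: x => ? ?; case: y. Qed.
Lemma ropts_add x y : ropts (game_add x y) =
  map (fun a => game_add a y) (ropts x) ++ map (fun a => game_add x a) (ropts y).
Proof. by case: x => ? ?; case: y. Qed.

Lemma In_addL1 x y a : List.In a (lopts x) -> List.In (game_add a y) (lopts (game_add x y)).
Proof. by move=> H; rewrite lopts_add In_cat; left; apply: In_map. Qed.
Lemma In_addL2 x y a : List.In a (lopts y) -> List.In (game_add x a) (lopts (game_add x y)).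
Proof. by move=> H; rewrite lopts_add In_cat; right; apply: In_map. Qed.
Lemma In_addR1 x y a : List.In a (ropts x) -> List.In (game_add a y) (ropts (game_add x y)).
Proof. by move=> H; rewrite ropts_add In_cat; left; apply: In_map. Qed.
Lemma In_addR2 x y a : List.In a (ropts y) -> List.In (game_add x a) (ropts (game_add x y)).
Proof. by move=> H; rewrite ropts_add In_cat; right; apply: In_map. Qed.

Lemma In_addL x y c : List.In c (lopts (game_add x y)) ->
  (exists a, List.In a (lopts x) /\ c = game_add a y) \/
  (exists a, List.In a (lopts y) /\ c = game_add x a).
Proof. rewrite lopts_add In_cat => -[H|H]; [left|right]; exact: In_map_inv H. Qed.
Lemma In_addR x y c : List.In c (ropts (game_add x y)) ->
  (exists a, List.In a (ropts x) /\ c = game_add a y) \/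
  (exists a, List.In a (ropts y) /\ c = game_add x a).
Proof. rewrite ropts_add In_cat => -[H|H]; [left|right]; exact: In_map_inv H. Qed.

Lemma mono_l x y z : game_le x y -> game_le (game_add x z) (game_add y z).
Proof.
move: {2}(gsize x + gsize y + gsize z) (leqnn (gsize x + gsize y + gsize z)) => n.
elim: n x y z => [|n IH] x y z Hs Hxy; first by have := gsize_gt0 x; lia.
apply/leP; split=> c Hc; apply/negP => H.
- case: (In_addL Hc) => [[a [Ha ->]]|[a [Ha ->]]] in H *.
  + case: (nleP (le_lopt Hxy Ha)) => [[yl [Hyl Hayl]]|[ar [Har Hary]]].
    * have H1 : game_le (game_add a z) (game_add yl z).
        apply: IH Hayl; have := size_l Ha; have := size_l Hyl; lia.
      by have := not_le_lopt (In_addL1 z Hyl); rewrite (le_trans H H1).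
    * have H1 : game_le (game_add ar z) (game_add y z).
        apply: IH Hary; have := size_l Ha; have := size_r Har; lia.
      by have := le_ropt H (In_addR1 z Har); rewrite H1.
  + have H1 : game_le (game_add x a) (game_add y a).
      apply: IH Hxy; have := size_l Ha; lia.
    by have := not_le_lopt (In_addL2 y Ha); rewrite (le_trans H H1).
- case: (In_addR Hc) => [[b [Hb ->]]|[b [Hb ->]]] in H *.
  + case: (nleP (le_ropt Hxy Hb)) => [[bl [Hbl Hxbl]]|[xr [Hxr Hxrb]]].
    * have H1 : game_le (game_add x z) (game_add bl z).
        apply: IH Hxbl; have := size_r Hb; have := size_l Hbl; lia.
      by have := le_lopt H (In_addL1 z Hbl); rewrite H1.
    * have H1 : game_le (game_add xr z) (game_add b z).
        apply: IH Hxrb; have := size_r Hb; have := size_r Hxr; lia.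
      by have := not_le_ropt (In_addR1 z Hxr); rewrite (le_trans H1 H).
  + have H1 : game_le (game_add x b) (game_add y b).
      apply: IH Hxy; have := size_r Hb; lia.
    by have := not_le_ropt (In_addR2 x Hb); rewrite (le_trans H1 H).
Qed.

Lemma mono_r x y z : game_le x y -> game_le (game_add z x) (game_add z y).
Proof.
move: {2}(gsize x + gsize y + gsize z) (leqnn (gsize x + gsize y + gsize z)) => n.
elim: n x y z => [|n IH] x y z Hs Hxy; first by have := gsize_gt0 x; lia.
apply/leP; split=> c Hc; apply/negP => H.
- case: (In_addL Hc) => [[a [Ha ->]]|[a [Ha ->]]] in H *.
  + have H1 : game_le (game_add a x) (game_add a y).
      apply: IH Hxy; have := size_l Ha; lia.
    by have := not_le_lopt (In_addL1 y Ha); rewrite (le_trans H H1).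
  + case: (nleP (le_lopt Hxy Ha)) => [[yl [Hyl Hayl]]|[ar [Har Hary]]].
    * have H1 : game_le (game_add z a) (game_add z yl).
        apply: IH Hayl; have := size_l Ha; have := size_l Hyl; lia.
      by have := not_le_lopt (In_addL2 z Hyl); rewrite (le_trans H H1).
    * have H1 : game_le (game_add z ar) (game_add z y).
        apply: IH Hary; have := size_l Ha; have := size_r Har; lia.
      by have := le_ropt H (In_addR2 z Har); rewrite H1.
- case: (In_addR Hc) => [[b [Hb ->]]|[b [Hb ->]]] in H *.
  + have H1 : game_le (game_add b x) (game_add b y).
      apply: IH Hxy; have := size_r Hb; lia.
    by have := not_le_ropt (In_addR1 x Hb); rewrite (le_trans H1 H).
  + case: (nleP (le_ropt Hxy Hb)) => [[bl [Hbl Hxbl]]|[xr [Hxr Hxrb]]].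
    * have H1 : game_le (game_add z x) (game_add z bl).
        apply: IH Hxbl; have := size_r Hb; have := size_l Hbl; lia.
      by have := le_lopt H (In_addL2 z Hbl); rewrite H1.
    * have H1 : game_le (game_add z xr) (game_add z b).
        apply: IH Hxrb; have := size_r Hb; have := size_r Hxr; lia.
      by have := not_le_ropt (In_addR2 z Hxr); rewrite (le_trans H1 H).
Qed.

Lemma key x y :
  (forall a, List.In a (lopts x) -> game_le a x) ->
  (forall b, List.In b (ropts y) -> game_le y b) ->
  game_le (game_add x x) (game_add y y) -> game_le x y.
Proof.
move=> Hx Hy Hs; case: (boolP (game_le x y)) => // /nleP
  [[a [Ha Hya]]|[b [Hb Hbx]]].
- have Hyx := le_trans Hya (Hx a Ha).
  have H1 := le_trans (le_trans Hs (mono_l y Hya)) (mono_r a Hyx).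
  by have := not_le_lopt (In_addL1 x Ha); rewrite H1.
- have Hyx := le_trans (Hy b Hb) Hbx.
  have H1 := le_trans (le_trans (mono_r y Hbx) (mono_l x Hyx)) Hs.
  by have := not_le_ropt (In_addR2 y Hb); rewrite H1.
Qed.

Lemma num_l x : is_number x -> forall a, List.In a (lopts x) -> game_le a x.
Proof. by case/andP=> /allIn H _ a /H /andP []. Qed.
Lemma num_r x : is_number x -> forall a, List.In a (ropts x) -> game_le x a.
Proof. by case/andP=> _ /allIn H a /H /andP []. Qed.

Theorem lemma2p9 (m D : rat) :
  dyadic m -> dyadic D ->
  is_number (canon m) -> is_number (ball m D) ->
  balanced m D ->
  game_eq (ball m D) (canon m).
Proof.
move=> _ _ Hm Hb [H1 H2]; split.
- exact: key (num_l Hb) (num_r Hm) H1.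
- exact: key (num_l Hm) (num_r Hb) H2.
Qed.
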